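(* Let $X$ be an infinite first-countable compact Hausdorff space. Then $X$ is a $\Delta$-space if and only if $X$ is countable.
   Context: A topological space $X$ is a $\Delta$-space if for every decreasing sequence $\{D_n:n\in\omega\}$ of subsets of $X$ with $\bigcap_n D_n=\emptyset$ there is a decreasing sequence $\{V_n:n\in\omega\}$ of open subsets of $X$ with $D_n\subseteq V_n$ for all $n$ and $\bigcap_n V_n=\emptyset$. *)

(* Defs.v *)
From HB Require Import structures.
From mathcomp Require Import all_boot all_order all_algebra.
From mathcomp Require Import all_classical all_reals all_analysis.
Set Implicit Arguments. Unset Strict Implicit. Unset Printing Implicit Defensive.
Local Open Scope classical_set_scope.

Definition first_countable (X : topologicalType) : Prop :=
  forall x : X, exists B : nat -> set X,
    (forall n, nbhs x (B n)) /\
    (forall U, nbhs x U -> exists n, B n `<=` U).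

Definition delta_space (X : topologicalType) : Prop :=
  forall D : nat -> set X,
    (forall n, D n.+1 `<=` D n) ->
    \bigcap_n D n = set0 ->
    exists V : nat -> set X,
      (forall n, open (V n)) /\
      (forall n, V n.+1 `<=` V n) /\
      (forall n, D n `<=` V n) /\
      \bigcap_n V n = set0.

(* Main.v *)
Require Import Defs.
From HB Require Import structures.
From mathcomp Require Import all_boot all_order all_algebra.
From mathcomp Require Import all_classical all_reals all_analysis.
Local Open Scope classical_set_scope.

Lemma sub_cnt T (A B : set T) : A `<=` B -> countable B -> countable A.
Proof.
move=> AB /countable_injP[f fi]; apply/countable_injP; exists f.
by move=> x y /[!inE] /AB xB /AB yB; apply: fi; rewrite inE.
Qed.

Lemma cntU T (A B : set T) : countable A -> countable B -> countable (A `|` B).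
Proof.
move=> cA cB.
have -> : A `|` B = \bigcup_(i in [set: bool]) (if i then A else B).
  apply/seteqP; split => x.
    by case=> ?; [exists true|exists false].
  by case=> -[] _ ?; [left|right].
by apply: bigcup_countable => // -[].
Qed.

Section S.
Variable X : topologicalType.
Hypothesis hT : hausdorff_space X.
Hypothesis cX : compact [set: X].

Lemma reg (x : X) (U : set X) : nbhs x U -> exists2 W, nbhs x W & closure W `<=` U.
Proof.
move=> xU; have := @compact_regular X x setT hT cX filterT.
by move=> /(_ _) /(_ U xU) [W xW WU]; exists W.
Qed.

Lemma cond_pt (K : set X) : closed K -> ~ countable K ->
  exists p, K p /\ forall B, nbhs p B -> ~ countable (K `&` B).
Proof.
move=> clK ncK.
pose F := fun A : set X => countable (K `\` A).
have FF : ProperFilter F.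
  constructor.
    by rewrite /F setD0.
  constructor.
  - by rewrite /F setDT.
  - move=> A B FA FB; rewrite /F setDIr; exact: cntU.
  - by move=> P Q PQ; apply: sub_cnt => x [Kx nPx]; split=> // /PQ.
have [p [_ clp]] := cX F FF (@filterT _ F FF).
have Kp : K p.
  apply: clK => B pB; apply: clp => //.
  by rewrite /F setDv.
exists p; split => // B pB cKB.
have FA : F (K `\` B).
  apply: sub_cnt cKB => x [Kx nx]; split => //.
  by apply: contrapT => nBx; apply: nx; split.
have [z [[_ nBz] Bz]] := clp _ _ FA pB.
exact: nBz Bz.
Qed.

Definition Cd := [set x : X | forall B, nbhs x B -> ~ countable B].

Lemma perfect (x : X) : first_countable X -> Cd x ->
  forall U, nbhs x U -> exists y, Cd y /\ U y /\ y <> x.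
Proof.
move=> hfc Cx U xU.
have [Bs [Bn Bsub]] := hfc x.
have [W xW WU] := reg _ _ xU.
pose K := closure W.
have xK : nbhs x K by apply: filterS xW; exact: subset_closure.
pose O n := interior (Bs n).
have [n ncn] : exists n, ~ countable (K `\` O n).
  apply: contrapT => h; apply: (Cx K xK).
  have -> : K = (\bigcup_(n in [set: nat]) (K `\` O n)) `|` [set x].
    apply/seteqP; split => y.
      move=> Ky; have [->|yx] := pselect (y = x); first by right.
      have /eqP xy : x <> y by move=> e; apply: yx.
      have [A [oA xA yA]] := hausdorff_accessible hT xy.
      rewrite inE in yA; rewrite inE in xA.
      have [m BmA] := Bsub A (open_nbhs_nbhs (conj oA xA)).
      left; exists m => //; split => // Oy; apply: yA.
      exact: BmA _ (interior_subset Oy).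
    by move=> [[m _ [Ky _]]|/= ->] //; exact: nbhs_singleton.
  apply: cntU; last exact: countable1.
  by apply: bigcup_countable => // m _; apply: contrapT => nc; apply: h; exists m.
have clKO : closed (K `\` O n).
  apply: closedI; first exact: closed_closure.
  exact/open_closedC/open_interior.
have [p [[Kp nOp] hp]] := cond_pt _ clKO ncn.
exists p; split; last split.
- by move=> B pB cB; apply: (hp B pB); apply: sub_cnt cB => z [].
- exact: (WU p Kp).

- by move=> e; apply: nOp; rewrite e; exact: Bn.
Qed.

Lemma delta_cnt : first_countable X -> delta_space X -> countable [set: X].
Proof.
move=> hfc hD; apply: contrapT => nc.
have [c [_ hc]] := cond_pt _ closedT nc.
have Cc : Cd c by move=> B cB cntB; apply: (hc B cB); apply: sub_cnt cntB => z [].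
have [Bs hBs] := choice hfc.
have /choice [y hy] : forall xn : X * nat, exists y,
  Cd xn.1 -> Cd y /\ Bs xn.1 xn.2 y /\ y <> xn.1.
  case=> x n /=; have [Cx|nCx] := pselect (Cd x); last by exists x.
  have [z [Cz [Bz zx]]] := perfect x hfc Cx _ ((hBs x).1 n).
  by exists z.
pose h := fun l : seq nat => foldr (fun n a => y (a, n)) c l.
pose A := range h.
have Ch : forall l, Cd (h l).
  elim => [|n l IH] //=; exact: (hy (h l, n) IH).1.
have /choice [g hg] : forall x : X, exists l : seq nat, A x -> h l = x.
  move=> x; have [[l _ <-]|nA] := pselect (A x); first by exists l.
  by exists [::].
pose io x := choice.pickle (g x).
have ioinj : forall a b, A a -> A b -> io a = io b -> a = b.
  move=> a b Aa Ab /(pcan_inj choice.pickleK) e.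
  by rewrite -(hg a Aa) -(hg b Ab) e.
have noiso : forall a U, A a -> nbhs a U -> exists b, A b /\ U b /\ b <> a.
  move=> a U [l _ <-] aU.
  have [m BmU] := (hBs (h l)).2 U aU.
  have [_ [Bb ba]] := hy (h l, m) (Ch l).
  exists (h (m :: l)); split; first by exists (m :: l).
  by split; [exact: BmU | exact: ba].
have L3 : forall n U, open U -> (exists a, A a /\ U a) ->
    exists b, A b /\ U b /\ (n <= io b)%N.
  elim => [|n IH] U oU hU; first by have [a [Aa Ua]] := hU; exists a.
  have [b [Ab [Ub nb]]] := IH U oU hU.
  move: nb; rewrite leq_eqVlt => /orP[/eqP nb|nb]; last by exists b.
  have [b' [Ab' [Ub' b'b]]] := noiso b U Ab (open_nbhs_nbhs (conj oU Ub)).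
  have /eqP bb' : b' <> b by [].
  have [W [oW b'W bW]] := hausdorff_accessible hT bb'.
  rewrite inE in b'W; rewrite inE in bW.
  have [c' [Ac [[Uc Wc] nc']]] := IH (U `&` W) (openI oU oW)
    (ex_intro _ b' (conj Ab' (conj Ub' b'W))).
  exists c'; split => //; split => //.
  move: nc'; rewrite leq_eqVlt => /orP[/eqP e|//].
  exfalso; have ecb := ioinj _ _ Ab Ac (etrans (esym nb) e).
  by apply: bW; rewrite ecb.
pose D n := [set a | A a /\ (n <= io a)%N].
have Ddec : forall n, D n.+1 `<=` D n.
  by move=> n a [Aa na]; split => //; exact: ltnW.
have DE : \bigcap_n D n = set0.
  apply/seteqP; split => // a Da; have [Aa /=] := Da (io a).+1 I.
  by rewrite ltnn.
have [V [Vo [Vdec [DV V0]]]] := hD D Ddec DE.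
have /choice [st hst] : forall nU : nat * set X, exists U',
  (open nU.2 /\ exists a, A a /\ nU.2 a) ->
  open U' /\ (exists a, A a /\ U' a) /\ closure U' `<=` nU.2 `&` V nU.1.
  case=> n U /=.
  have [[oU hU]|nh] := pselect (open U /\ exists a, A a /\ U a); last first.
    by exists set0.
  have [b [Ab [Ub nb]]] := L3 n U oU hU.
  have Vb : V n b by apply: DV; split.
  have [W bW WUV] := reg b (U `&` V n)
    (open_nbhs_nbhs (conj (openI oU (Vo n)) (conj Ub Vb))).
  exists (interior W) => _; split; first exact: open_interior.
  split; first by exists b; split.
  by move=> z /(closureS (@interior_subset _ W)) /WUV.
pose Us := fix Us (n : nat) : set X :=
  match n with 0 => setT | m.+1 => st (m, Us m) end.
have inv : forall n, open (Us n) /\ exists a, A a /\ Us n a.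
  elim => [|n [oU hU]].
    by split; [exact: openT | exists (h [::]); split => //; exists [::]].
  case: (hst (n, Us n) (conj oU hU)) => o1 [h1 _]; by split.
have clUs n : closure (Us n.+1) `<=` Us n `&` V n := (hst (n, Us n) (inv n)).2.2.
have Usdec : forall m n, (m <= n)%N -> Us n `<=` Us m.
  move=> m n; elim: n => [|n IH]; first by rewrite leqn0 => /eqP ->.
  rewrite leq_eqVlt => /orP [/eqP -> // | ]; rewrite ltnS => mn z Uz.
  apply: (IH mn z).
  by have [] := clUs n z (subset_closure Uz).
pose F := filter_from setT Us.
have FF : ProperFilter F.
  apply: filter_from_proper; last first.
    by move=> i _; have [_ [a [_ ?]]] := inv i; exists a.
  apply: filter_from_filter; first by exists 0.
  move=> i j _ _; exists (maxn i j) => // z Uz.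
  by split; apply: Usdec Uz; rewrite ?leq_maxl ?leq_maxr.
have [p [_ clp]] := cX F FF (@filterT _ F FF).
have : (\bigcap_n V n) p.
  move=> n _.
  have cl : closure (Us n.+1) p by move=> B pB; apply: (clp _ B _ pB); exists n.+1.
  by have [] := clUs n p cl.
by rewrite V0.
Qed.
End S.

Lemma cnt_delta (X : topologicalType) : hausdorff_space X ->
  countable [set: X] -> delta_space X.
Proof.
move=> hT /countable_injP[f fi] D Ddec D0.
have finj : forall x y, f x = f y -> x = y by move=> x y; apply: fi; rewrite inE.
have T1 := hausdorff_accessible hT.
pose S n k := [set x | f x = k /\ ~ D n x].
have Scl n k : closed (S n k).
  have [[x0 Sx0]|nS] := pselect (exists x, S n k x).
    have -> : S n k = [set x0].
      apply/seteqP; split => x /=.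
        by case: Sx0 => <- _ [/finj].
      by move=> ->.
    exact: accessible_closed_set1.
  have -> : S n k = set0 by apply/seteqP; split => x // Sx; apply: nS; exists x.
  exact: closed0.
pose W n m := [set x | forall k, (k < m)%N -> ~ S n k x].
have Wo n m : open (W n m).
  elim: m => [|m IH].
    have -> : W n 0 = setT by apply/seteqP; split => x // _ k.
    exact: openT.
  have -> : W n m.+1 = W n m `&` ~` S n m.
    apply/seteqP; split => x /=.
      by move=> h; split => [k km|]; apply: h => //; apply: ltnW.
    move=> [h1 h2] k; rewrite ltnS leq_eqVlt => /orP[/eqP -> //|]; exact: h1.
  by apply: openI => //; rewrite openC; exact: Scl.
exists (fun n => W n n); split => //; split.
  move=> n x Wx k kn [fk nD]; apply: (Wx k (ltnW kn)); split => //.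
  by move=> /Ddec.
split.
  by move=> n x Dx k kn [_].
apply/seteqP; split => // x Wx.
have [m nDm] : exists m, ~ D m x.
  apply: contrapT => h; have : (\bigcap_n D n) x.
    by move=> k _; apply: contrapT => ?; apply: h; exists k.
  by rewrite D0.
pose n := maxn m (f x).+1.
apply: (Wx n I (f x)); first by rewrite leq_max leqnn orbT.
split => //; apply: contra_not nDm.
have : (m <= n)%N by rewrite leq_max leqnn.
elim: n {Wx} => [|n IH]; first by rewrite leqn0 => /eqP ->.
rewrite leq_eqVlt => /orP[/eqP -> //|]; rewrite ltnS => mn /Ddec.
exact: IH.
Qed.

Theorem proposition3p5 (X : topologicalType) :
  infinite_set [set: X] ->
  first_countable X ->
  compact [set: X] ->
  hausdorff_space X ->
  (delta_space X <-> countable [set: X]).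
Proof.
move=> _ hfc cX hT; split.
- exact: delta_cnt.
- exact: cnt_delta.
Qed.
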